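(* Let $\mathfrak k$ be a Hilbert–Lie algebra, $\phi$ an automorphism of $\mathfrak k$ of finite order, and $\mathfrak t\subseteq\mathfrak k^\phi$ a maximal abelian subalgebra of the fixed point algebra. Then the centralizer $\mathfrak t_{\mathfrak k}:=\mathfrak z_{\mathfrak k}(\mathfrak t)=\{x\in\mathfrak k:[x,\mathfrak t]=0\}$ is a maximal abelian subalgebra of $\mathfrak k$.
   Context: A Hilbert–Lie algebra is a real Lie algebra with Hilbert space structure such that $\langle[x,y],z\rangle=\langle x,[y,z]\rangle$. Automorphisms are isometric Lie algebra automorphisms; $\mathfrak k^\phi=\{x\in\mathfrak k:\phi(x)=x\}$. *)

(* Defs.v *)
From Stdlib Require Import Reals.
Open Scope R_scope.

Record HilbertLie := {
  carrier :> Type;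
  zero : carrier;
  add : carrier -> carrier -> carrier;
  opp : carrier -> carrier;
  scal : R -> carrier -> carrier;
  inner : carrier -> carrier -> R;
  br : carrier -> carrier -> carrier;
  addA : forall x y z, add x (add y z) = add (add x y) z;
  addC : forall x y, add x y = add y x;
  add0 : forall x, add zero x = x;
  addN : forall x, add x (opp x) = zero;
  scalA : forall a b x, scal a (scal b x) = scal (a * b) x;
  scal1 : forall x, scal 1 x = x;
  scalDr : forall a x y, scal a (add x y) = add (scal a x) (scal a y);
  scalDl : forall a b x, scal (a + b) x = add (scal a x) (scal b x);
  innerC : forall x y, inner x y = inner y x;
  innerDl : forall x y z, inner (add x y) z = inner x z + inner y z;
  innerZl : forall a x y, inner (scal a x) y = a * inner x y;
  inner_ge0 : forall x, 0 <= inner x x;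
  inner_eq0 : forall x, inner x x = 0 -> x = zero;
  complete : forall u : nat -> carrier,
    (forall eps, 0 < eps -> exists N, forall m n, (N <= m)%nat -> (N <= n)%nat ->
        sqrt (inner (add (u m) (opp (u n))) (add (u m) (opp (u n)))) < eps) ->
    exists l, forall eps, 0 < eps -> exists N, forall n, (N <= n)%nat ->
        sqrt (inner (add (u n) (opp l)) (add (u n) (opp l))) < eps;
  brDl : forall x y z, br (add x y) z = add (br x z) (br y z);
  brZl : forall a x y, br (scal a x) y = scal a (br x y);
  brDr : forall x y z, br x (add y z) = add (br x y) (br x z);
  brZr : forall a x y, br x (scal a y) = scal a (br x y);
  br_alt : forall x, br x x = zero;
  jacobi : forall x y z,
    add (br x (br y z)) (add (br y (br z x)) (br z (br x y))) = zero;
  inner_inv : forall x y z, inner (br x y) z = inner x (br y z)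
}.

Arguments zero {h}. Arguments add {h}. Arguments opp {h}. Arguments scal {h}.
Arguments inner {h}. Arguments br {h}.

Definition is_automorphism (k : HilbertLie) (phi : k -> k) : Prop :=
  (forall x y, phi (add x y) = add (phi x) (phi y)) /\
  (forall a x, phi (scal a x) = scal a (phi x)) /\
  (forall x y, phi (br x y) = br (phi x) (phi y)) /\
  (forall x y, inner (phi x) (phi y) = inner x y) /\
  (forall x y, phi x = phi y -> x = y) /\
  (forall y, exists x, phi x = y).

Fixpoint iter_fun {T : Type} (n : nat) (f : T -> T) (x : T) : T :=
  match n with O => x | S n' => f (iter_fun n' f x) end.

Definition finite_order (k : HilbertLie) (phi : k -> k) : Prop :=
  exists n : nat, (1 <= n)%nat /\ forall x, iter_fun n phi x = x.

Definition fixed_pts (k : HilbertLie) (phi : k -> k) : k -> Prop :=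
  fun x => phi x = x.

Definition subalgebra (k : HilbertLie) (S : k -> Prop) : Prop :=
  S zero /\ (forall x y, S x -> S y -> S (add x y)) /\
  (forall a x, S x -> S (scal a x)) /\
  (forall x y, S x -> S y -> S (br x y)).

Definition abelian_subalgebra (k : HilbertLie) (S : k -> Prop) : Prop :=
  subalgebra k S /\ (forall x y, S x -> S y -> br x y = zero).

Definition max_abelian_in (k : HilbertLie) (A S : k -> Prop) : Prop :=
  abelian_subalgebra k S /\ (forall x, S x -> A x) /\
  (forall S' : k -> Prop, abelian_subalgebra k S' -> (forall x, S' x -> A x) ->
     (forall x, S x -> S' x) -> forall x, S' x -> S x).

Definition whole (k : HilbertLie) : k -> Prop := fun _ => True.

Definition centralizer (k : HilbertLie) (t : k -> Prop) : k -> Prop :=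
  fun x => forall y, t y -> br x y = zero.

(* Main.v *)
Require Import Defs.
From Stdlib Require Import Reals Lra Lia List.
Open Scope R_scope.


Section Lin.
Variable k : HilbertLie.
Local Notation V := (carrier k).

Lemma addr0 (x : V) : add x zero = x.
Proof. rewrite (addC k). apply add0. Qed.

Lemma add_cancel (a x y : V) : add a x = add a y -> x = y.
Proof.
  intros H. rewrite <- (add0 k x), <- (add0 k y), <- (addN k a), (addC k a), <- !(addA k), H. reflexivity.
Qed.

Lemma scal0 (x : V) : scal 0 x = zero.
Proof.
  apply (add_cancel (scal 0 x)). rewrite <- (scalDl k), Rplus_0_r, addr0. reflexivity.
Qed.

Lemma scalz (a : R) : scal a (@zero k) = zero.
Proof.
  apply (add_cancel (scal a zero)). rewrite <- (scalDr k), !addr0. reflexivity.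
Qed.

Lemma opp_scal (x : V) : opp x = scal (-1) x.
Proof.
  apply (add_cancel x). rewrite (addN k). rewrite <- (scal1 k x) at 1.
  rewrite <- (scalDl k). replace (1 + -1) with 0 by ring. rewrite scal0. reflexivity.
Qed.

Inductive ex := At (n : nat) | Ze | Ad (a b : ex) | Sc (r : R) (a : ex) | Op (a : ex).

Fixpoint eval (env : list V) (e : ex) : V :=
  match e with
  | At n => nth n env zero
  | Ze => zero
  | Ad a b => add (eval env a) (eval env b)
  | Sc r a => scal r (eval env a)
  | Op a => opp (eval env a)
  end.

Fixpoint coef (e : ex) (i : nat) : R :=
  match e with
  | At n => if Nat.eqb n i then 1 else 0
  | Ze => 0
  | Ad a b => coef a i + coef b i
  | Sc r a => r * coef a i
  | Op a => - coef a i
  end.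

Fixpoint sumv (env : list V) (f : nat -> R) (s : nat) : V :=
  match env with
  | nil => zero
  | v :: env' => add (scal (f s) v) (sumv env' f (S s))
  end.

Lemma sumv_ext env f g s : (forall i, f i = g i) -> sumv env f s = sumv env g s.
Proof. revert s. induction env; simpl; intros; auto. rewrite H, IHenv; auto. Qed.

Lemma add_swap4 (a b c d : V) : add (add a b) (add c d) = add (add a c) (add b d).
Proof.
  rewrite <- !(addA k). f_equal. rewrite !(addA k). f_equal. apply (addC k).
Qed.

Lemma sumv_add env f g s : sumv env (fun i => f i + g i) s = add (sumv env f s) (sumv env g s).
Proof.
  revert s. induction env; simpl; intros. rewrite addr0; auto.
  rewrite IHenv, (scalDl k). apply add_swap4.
Qed.

Lemma sumv_scal env r f s : sumv env (fun i => r * f i) s = scal r (sumv env f s).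
Proof.
  revert s. induction env; simpl; intros. rewrite scalz; auto.
  rewrite IHenv, (scalDr k), (scalA k). auto.
Qed.

Lemma sumv_zero env s : sumv env (fun _ => 0) s = zero.
Proof.
  revert s. induction env; simpl; intros; auto. rewrite IHenv, scal0, addr0. auto.
Qed.

Lemma sumv_at env n s : sumv env (fun i => if Nat.eqb n i then 1 else 0) s =
  if Nat.ltb n s then zero else nth (n - s) env zero.
Proof.
  revert s. induction env; simpl; intros.
  - destruct (Nat.ltb n s); auto. destruct (n - s)%nat; auto.
  - rewrite IHenv. destruct (Nat.eqb n s) eqn:E.
    + apply Nat.eqb_eq in E. subst. rewrite (scal1 k).
      replace (Nat.ltb s (S s)) with true by (symmetry; apply Nat.ltb_lt; lia).
      replace (Nat.ltb s s) with false by (symmetry; apply Nat.ltb_ge; lia).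
      rewrite Nat.sub_diag. apply addr0.
    + apply Nat.eqb_neq in E. rewrite scal0, add0.
      destruct (Nat.ltb n s) eqn:E2.
      * apply Nat.ltb_lt in E2. replace (Nat.ltb n (S s)) with true by (symmetry; apply Nat.ltb_lt; lia). auto.
      * apply Nat.ltb_ge in E2. replace (Nat.ltb n (S s)) with false by (symmetry; apply Nat.ltb_ge; lia).
        replace (n - s)%nat with (S (n - S s)) by lia. reflexivity.
Qed.

Lemma eval_sumv env e : eval env e = sumv env (coef e) 0.
Proof.
  induction e; simpl.
  - rewrite sumv_at. simpl. rewrite Nat.sub_0_r. auto.
  - rewrite sumv_zero. auto.
  - rewrite IHe1, IHe2, <- sumv_add. auto.
  - rewrite IHe, <- sumv_scal. auto.
  - rewrite IHe, opp_scal, <- sumv_scal. apply sumv_ext. intros; ring.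
Qed.

Fixpoint eqlist (l1 l2 : list R) : Prop :=
  match l1, l2 with
  | nil, nil => True
  | a :: l1', b :: l2' => a = b /\ eqlist l1' l2'
  | _, _ => False
  end.

Lemma sumv_ext_lt env f g s : (forall i, (i < length env)%nat -> f (s + i)%nat = g (s + i)%nat) ->
  sumv env f s = sumv env g s.
Proof.
  revert s. induction env; simpl; intros; auto.
  f_equal. f_equal. specialize (H 0%nat). rewrite !Nat.add_0_r in H. apply H; lia.
  apply IHenv. intros. replace (S s + i)%nat with (s + S i)%nat by lia. apply H. lia.
Qed.

Lemma eqlist_map (f g : nat -> R) s len : eqlist (map f (seq s len)) (map g (seq s len)) ->
  forall i, (i < len)%nat -> f (s + i)%nat = g (s + i)%nat.
Proof.
  revert s. induction len; simpl; intros. lia.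
  destruct H. destruct i. rewrite Nat.add_0_r; auto.
  replace (s + S i)%nat with (S s + i)%nat by lia. apply IHlen; auto. lia.
Qed.

Lemma eval_eq env e1 e2 :
  eqlist (map (coef e1) (seq 0 (length env))) (map (coef e2) (seq 0 (length env))) ->
  eval env e1 = eval env e2.
Proof.
  intros H. rewrite !eval_sumv. apply sumv_ext_lt. apply eqlist_map. auto.
Qed.

End Lin.
Arguments addr0 {k}. Arguments add_cancel {k}. Arguments scal0 {k}. Arguments scalz {k}. Arguments opp_scal {k}. Arguments add_swap4 {k}.

Ltac lmem x l := lazymatch l with
  | nil => constr:(false)
  | x :: _ => constr:(true)
  | _ :: ?l' => lmem x l'
  end.
Ltac lidx x l := lazymatch l with
  | x :: _ => constr:(O)
  | _ :: ?l' => let n := lidx x l' in constr:(S n)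
  end.
Ltac atoms t l := lazymatch t with
  | add ?a ?b => let l1 := atoms a l in atoms b l1
  | scal _ ?a => atoms a l
  | opp ?a => atoms a l
  | zero => l
  | _ => let b := lmem t l in
         lazymatch b with true => l | false => constr:(t :: l) end
  end.
Ltac reify t l := lazymatch t with
  | add ?a ?b => let ra := reify a l in let rb := reify b l in constr:(Ad ra rb)
  | scal ?r ?a => let ra := reify a l in constr:(Sc r ra)
  | opp ?a => let ra := reify a l in constr:(Op ra)
  | zero => constr:(Ze)
  | _ => let n := lidx t l in constr:(At n)
  end.
Ltac lin_eq :=
  lazymatch goal with
  | |- @eq ?T ?L ?Rr =>
    let l0 := atoms L (@nil T) in
    let l := atoms Rr l0 in
    let eL := reify L l in
    let eR := reify Rr l in
    change (eval _ l eL = eval _ l eR); apply eval_eq; simpl; repeat split; ring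
  end.

Section Test.
Variable k : HilbertLie.
Goal forall (a b : R) (x y : carrier k), add (scal a x) (add y (scal b x)) = add (scal (a+b) x) (add y zero).
Proof. intros. lin_eq. Qed.
End Test.


Section Basic.
Variable k : HilbertLie.
Local Notation V := (carrier k).

Lemma zero_scal (x : V) : zero = scal 0 x.
Proof. symmetry; apply scal0. Qed.

Lemma br0l (y : V) : br zero y = zero.
Proof. rewrite (zero_scal y) at 1. rewrite (brZl k). apply scal0. Qed.
Lemma br0r (y : V) : br y zero = zero.
Proof. rewrite (zero_scal y) at 1. rewrite (brZr k). apply scal0. Qed.
Lemma br_oppl (x y : V) : br (opp x) y = opp (br x y).
Proof. rewrite !opp_scal, (brZl k). auto. Qed.
Lemma br_oppr (x y : V) : br x (opp y) = opp (br x y).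
Proof. rewrite !opp_scal, (brZr k). auto. Qed.

Lemma br_anti (x y : V) : br x y = scal (-1) (br y x).
Proof.
  apply (add_cancel (br y x)).
  assert (H := br_alt k (add x y)). rewrite (brDl k), !(brDr k), !(br_alt k), add0, addr0 in H.
  rewrite (addC k), H. symmetry. rewrite <- (scal1 k (br y x)) at 1. rewrite <- (scalDl k).
  replace (1 + -1) with 0 by ring. apply scal0.
Qed.

Lemma jac (x y z : V) : br x (br y z) = add (br (br x y) z) (br y (br x z)).
Proof.
  assert (H := jacobi k x y z).
  rewrite (br_anti z (br x y)), (br_anti z x), (brZr k) in H.
  apply (add_cancel (add (scal (-1) (br y (br x z))) (scal (-1) (br (br x y) z)))).
  transitivity (@zero k). rewrite <- H. lin_eq. lin_eq.
Qed.

Lemma innerDr (x y z : V) : inner x (add y z) = inner x y + inner x z.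
Proof. rewrite (innerC k), (innerDl k), !(innerC k x). auto. Qed.
Lemma innerZr a (x y : V) : inner x (scal a y) = a * inner x y.
Proof. rewrite (innerC k), (innerZl k), (innerC k x). auto. Qed.
Lemma inner_oppl (x y : V) : inner (opp x) y = - inner x y.
Proof. rewrite opp_scal, (innerZl k). ring. Qed.
Lemma inner_oppr (x y : V) : inner x (opp y) = - inner x y.
Proof. rewrite opp_scal, innerZr. ring. Qed.
Lemma inner0l (y : V) : inner zero y = 0.
Proof. rewrite (zero_scal y), (innerZl k). ring. Qed.
Lemma inner0r (y : V) : inner y zero = 0.
Proof. rewrite (zero_scal y), innerZr. ring. Qed.
Lemma inner_br (a b c : V) : inner (br a b) c = - inner b (br a c).
Proof. rewrite br_anti, (innerZl k), (inner_inv k). ring. Qed.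

Definition CV := (V * V)%type.
Definition czero : CV := (zero, zero).
Definition cadd (u v : CV) : CV := (add (fst u) (fst v), add (snd u) (snd v)).
Definition csc (c : R * R) (u : CV) : CV :=
  (add (scal (fst c) (fst u)) (scal (- snd c) (snd u)), add (scal (fst c) (snd u)) (scal (snd c) (fst u))).
Definition cbr (u v : CV) : CV :=
  (add (br (fst u) (fst v)) (scal (-1) (br (snd u) (snd v))), add (br (fst u) (snd v)) (br (snd u) (fst v))).
Definition cconj (u : CV) : CV := (fst u, scal (-1) (snd u)).
Definition emb (x : V) : CV := (x, zero).
Definition rho (u w : CV) : R := inner (fst u) (fst w) - inner (snd u) (snd w).

Lemma pair_eq (u v : CV) : fst u = fst v -> snd u = snd v -> u = v.
Proof. destruct u, v; simpl; intros; subst; auto. Qed.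

Ltac bsimp := repeat (rewrite ?(brDl k), ?(brDr k), ?(brZl k), ?(brZr k), ?br_oppl, ?br_oppr, ?br0l, ?br0r).
Ltac ceq := apply pair_eq; simpl; bsimp; lin_eq.

Lemma cadd_comm u v : cadd u v = cadd v u.
Proof. ceq. Qed.
Lemma cadd_assoc u v w : cadd u (cadd v w) = cadd (cadd u v) w.
Proof. ceq. Qed.
Lemma cadd0 u : cadd u czero = u.
Proof. ceq. Qed.
Lemma c0add u : cadd czero u = u.
Proof. ceq. Qed.
Definition cmul (a b : R * R) : R * R := (fst a * fst b - snd a * snd b, fst a * snd b + snd a * fst b).
Definition cconjs (a : R * R) : R * R := (fst a, - snd a).
Lemma csc_csc a b u : csc a (csc b u) = csc (cmul a b) u.
Proof. ceq. Qed.
Lemma csc_add a u v : csc a (cadd u v) = cadd (csc a u) (csc a v).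
Proof. ceq. Qed.
Lemma csc_addl a b u : csc (fst a + fst b, snd a + snd b) u = cadd (csc a u) (csc b u).
Proof. ceq. Qed.
Lemma csc_zero a : csc a czero = czero.
Proof. ceq. Qed.
Lemma csc_0 u : csc (0,0) u = czero.
Proof. ceq. Qed.
Lemma csc_1 u : csc (1,0) u = u.
Proof. ceq. Qed.
Lemma cbr_addl u v w : cbr (cadd u v) w = cadd (cbr u w) (cbr v w).
Proof. ceq. Qed.
Lemma cbr_addr u v w : cbr w (cadd u v) = cadd (cbr w u) (cbr w v).
Proof. ceq. Qed.
Lemma cbr_cscl a u v : cbr (csc a u) v = csc a (cbr u v).
Proof. ceq. Qed.
Lemma cbr_cscr a u v : cbr u (csc a v) = csc a (cbr u v).
Proof. ceq. Qed.
Lemma cbr0l u : cbr czero u = czero.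
Proof. ceq. Qed.
Lemma cbr0r u : cbr u czero = czero.
Proof. ceq. Qed.
Lemma cbr_anti u v : cbr u v = csc (-1, 0) (cbr v u).
Proof. apply pair_eq; simpl; bsimp; rewrite ?(br_anti (fst v)), ?(br_anti (snd v)); bsimp; lin_eq. Qed.
Lemma cconj_cbr u v : cconj (cbr u v) = cbr (cconj u) (cconj v).
Proof. ceq. Qed.
Lemma cconj_cconj u : cconj (cconj u) = u.
Proof. ceq. Qed.
Lemma cconj_csc a u : cconj (csc a u) = csc (cconjs a) (cconj u).
Proof. ceq. Qed.
Lemma cconj_zero : cconj czero = czero.
Proof. ceq. Qed.
Lemma cbr_emb x y : cbr (emb x) (emb y) = emb (br x y).
Proof. ceq. Qed.

Lemma cjac x y z : cbr x (cbr y z) = cadd (cbr (cbr x y) z) (cbr y (cbr x z)).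
Proof.
  destruct x as [x1 x2]. apply pair_eq; simpl; bsimp; rewrite ?(jac x1), ?(jac x2); lin_eq.
Qed.

Ltac isimp := repeat (rewrite ?(innerDl k), ?innerDr, ?(innerZl k), ?innerZr, ?inner_oppl, ?inner_oppr, ?inner0l, ?inner0r).

Lemma rho_inv u v w : rho (cbr u v) w = - rho v (cbr u w).
Proof.
  unfold rho; simpl; bsimp; isimp. rewrite !inner_br. ring.
Qed.

Lemma rho_zero u : rho u czero = 0.
Proof. unfold rho; simpl; isimp. ring. Qed.

Lemma rho_conj_zero u : rho u (cconj u) = 0 -> u = czero.
Proof.
  unfold rho; destruct u as [u1 u2]; simpl; isimp. intros H.
  assert (H1 := inner_ge0 k u1). assert (H2 := inner_ge0 k u2).
  apply pair_eq; simpl; apply (inner_eq0 k); lra.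
Qed.

End Basic.
Arguments zero_scal {k}. Arguments br0l {k}. Arguments br0r {k}. Arguments br_oppl {k}. Arguments br_oppr {k}. Arguments br_anti {k}. Arguments jac {k}. Arguments innerDr {k}. Arguments innerZr {k}. Arguments inner_oppl {k}. Arguments inner_oppr {k}. Arguments inner0l {k}. Arguments inner0r {k}. Arguments inner_br {k}.


Ltac seq := repeat match goal with p : (R * R)%type |- _ => destruct p end;
  apply injective_projections; unfold cmul, cconjs; simpl; ring.

Lemma cmul_comm a b : cmul a b = cmul b a. Proof. seq. Qed.
Lemma cmul_assoc a b c : cmul a (cmul b c) = cmul (cmul a b) c. Proof. seq. Qed.
Lemma cmul_1l a : cmul (1,0) a = a. Proof. seq. Qed.
Lemma cmul_1r a : cmul a (1,0) = a. Proof. seq. Qed.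

Fixpoint cpow (c : R * R) (m : nat) : R * R :=
  match m with O => (1, 0) | S m' => cmul c (cpow c m') end.

Lemma cpow_add c a b : cpow c (a + b) = cmul (cpow c a) (cpow c b).
Proof. induction a; simpl. rewrite cmul_1l; auto. rewrite IHa, cmul_assoc. auto. Qed.
Lemma cpow_one m : cpow (1,0) m = (1,0).
Proof. induction m; simpl; auto. rewrite IHm. seq. Qed.
Lemma cpow_mul c a b : cpow c (a * b) = cpow (cpow c a) b.
Proof.
  induction b; simpl. rewrite Nat.mul_0_r. auto.
  rewrite Nat.mul_succ_r, cpow_add, IHb, cmul_comm. auto.
Qed.
Lemma cpow_cmul a b m : cpow (cmul a b) m = cmul (cpow a m) (cpow b m).
Proof. induction m; simpl. seq. rewrite IHm. seq. Qed.

Definition cplus (a b : R * R) : R * R := (fst a + fst b, snd a + snd b).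
Fixpoint sumC (m : nat) (g : nat -> R * R) : R * R :=
  match m with O => (0, 0) | S m' => cplus (sumC m' g) (g m') end.

Lemma geo w m : cmul (fst w - 1, snd w) (sumC m (cpow w)) = (fst (cpow w m) - 1, snd (cpow w m)).
Proof.
  induction m; simpl. seq.
  unfold cplus. destruct (sumC m (cpow w)) as [s1 s2]. destruct (cpow w m) as [p1 p2].
  destruct w as [w1 w2]. unfold cmul in *; simpl in *.
  injection IHm; intros E2 E1. apply injective_projections; simpl; nra.
Qed.

Lemma geo0 w m : cpow w m = (1,0) -> w <> (1,0) -> sumC m (cpow w) = (0,0).
Proof.
  intros H1 H2. assert (G := geo w m). rewrite H1 in G. simpl in G.
  destruct (sumC m (cpow w)) as [s1 s2]. destruct w as [w1 w2]. unfold cmul in G; simpl in G.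
  injection G; intros E2 E1.
  assert (Hn : (w1 - 1) * (w1 - 1) + w2 * w2 <> 0).
  { intro Hc. apply H2. assert (w1 - 1 = 0) by nra. assert (w2 = 0) by nra. f_equal; lra. }
  assert (X1 : (w1-1)*s1 - w2*s2 = 0) by lra. assert (X2 : (w1-1)*s2 + w2*s1 = 0) by lra.
  assert (s1 * ((w1 - 1) * (w1 - 1) + w2 * w2) = 0).
  { replace (s1 * ((w1 - 1) * (w1 - 1) + w2 * w2)) with ((w1-1)*((w1-1)*s1 - w2*s2) + w2*((w1-1)*s2 + w2*s1)) by ring.
    rewrite X1, X2; ring. }
  assert (s2 * ((w1 - 1) * (w1 - 1) + w2 * w2) = 0).
  { replace (s2 * ((w1 - 1) * (w1 - 1) + w2 * w2)) with ((w1-1)*((w1-1)*s2 + w2*s1) - w2*((w1-1)*s1 - w2*s2)) by ring.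
    rewrite X1, X2; ring. }
  f_equal; [ apply (Rmult_eq_reg_r _ _ _ (eq_trans H (eq_sym (Rmult_0_l _))) Hn) 
           | apply (Rmult_eq_reg_r _ _ _ (eq_trans H0 (eq_sym (Rmult_0_l _))) Hn) ].
Qed.

Lemma sumC_one m : sumC m (fun _ => (1,0)) = (INR m, 0).
Proof. induction m. reflexivity. cbn [sumC]. rewrite IHm, S_INR. unfold cplus; simpl. f_equal; ring. Qed.

Lemma sumC_ext m f g : (forall i, f i = g i) -> sumC m f = sumC m g.
Proof. intros H; induction m; simpl; auto. rewrite IHm, H. auto. Qed.

Section Roots.
Variable n : nat.
Hypothesis hn : (1 <= n)%nat.
Definition th := 2 * PI / INR n.
Definition zeta := (cos th, sin th).
Definition mu := (cos th, - sin th).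

Lemma cpow_zeta m : cpow zeta m = (cos (INR m * th), sin (INR m * th)).
Proof.
  induction m. simpl. rewrite Rmult_0_l, cos_0, sin_0. auto.
  cbn [cpow]. rewrite IHm, S_INR. unfold cmul, zeta; simpl.
  replace ((INR m + 1) * th) with (th + INR m * th) by ring. rewrite cos_plus, sin_plus. f_equal; ring.
Qed.
Lemma cpow_mu m : cpow mu m = (cos (INR m * th), - sin (INR m * th)).
Proof.
  induction m. simpl. rewrite Rmult_0_l, cos_0, sin_0. f_equal; ring.
  cbn [cpow]. rewrite IHm, S_INR. unfold cmul, mu; simpl.
  replace ((INR m + 1) * th) with (th + INR m * th) by ring. rewrite cos_plus, sin_plus. f_equal; ring.
Qed.
Lemma n_th : INR n * th = 2 * PI.
Proof. unfold th. assert (INR n <> 0) by (apply not_0_INR; lia). field. auto. Qed.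

Lemma zeta_n : cpow zeta n = (1,0).
Proof. rewrite cpow_zeta, n_th, cos_2PI, sin_2PI. auto. Qed.
Lemma mu_n : cpow mu n = (1,0).
Proof. rewrite cpow_mu, n_th, cos_2PI, sin_2PI. f_equal; ring. Qed.
Lemma zeta_mu j : cmul (cpow zeta j) (cpow mu j) = (1,0).
Proof. rewrite <- cpow_cmul. replace (cmul zeta mu) with (1,0). apply cpow_one.
  unfold cmul, zeta, mu; simpl. f_equal. rewrite <- (sin2_cos2 th). unfold Rsqr. ring. ring. Qed.
Lemma zeta_norm j : cmul (cpow zeta j) (cconjs (cpow zeta j)) = (1,0).
Proof. rewrite cpow_zeta. unfold cmul, cconjs; simpl. f_equal.
  rewrite <- (sin2_cos2 (INR j * th)). unfold Rsqr. ring. ring. Qed.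

Lemma mu_ne1 m : (0 < m < n)%nat -> cpow mu m <> (1,0).
Proof.
  intros Hm. rewrite cpow_mu. intro H. injection H; intros H2 H1.
  assert (Hs : sin (INR m * th) = 0) by lra.
  assert (Hpos : 0 < INR m * th).
  { unfold th. apply Rmult_lt_0_compat. apply lt_0_INR; lia.
    apply Rdiv_lt_0_compat. assert (0 < PI) by apply PI_RGT_0. lra. apply lt_0_INR; lia. }
  assert (Hlt : INR m * th < 2 * PI).
  { rewrite <- n_th. apply Rmult_lt_compat_r. unfold th. apply Rdiv_lt_0_compat.
    assert (0 < PI) by apply PI_RGT_0. lra. apply lt_0_INR; lia. apply lt_INR; lia. }
  destruct (sin_eq_0_0 _ Hs) as [kk Hk].
  assert (0 < PI) by apply PI_RGT_0.
  assert (Hk1 : (0 < kk)%Z). { apply lt_IZR. rewrite Hk in Hpos. nra. }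
  assert (Hk2 : (kk < 2)%Z). { apply lt_IZR. rewrite Hk in Hlt. nra. }
  assert (kk = 1%Z) by lia. subst kk. rewrite Hk, Rmult_1_l, cos_PI in H1. lra.
Qed.
End Roots.


Section Sums.
Variable k : HilbertLie.
Fixpoint csum (m : nat) (f : nat -> CV k) : CV k :=
  match m with O => czero k | S m' => cadd k (csum m' f) (f m') end.

Lemma csum_ext m f g : (forall i, (i < m)%nat -> f i = g i) -> csum m f = csum m g.
Proof. induction m; simpl; intros; auto. rewrite IHm, H; auto. Qed.

Lemma csum_add m f g : csum m (fun i => cadd k (f i) (g i)) = cadd k (csum m f) (csum m g).
Proof.
  induction m; simpl. rewrite cadd0; auto. rewrite IHm.
  rewrite <- !cadd_assoc. f_equal. rewrite !cadd_assoc. f_equal. apply cadd_comm.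
Qed.
Lemma csum_zero m : csum m (fun _ => czero k) = czero k.
Proof. induction m; simpl; auto. rewrite IHm, cadd0; auto. Qed.
Lemma csum_csc m a f : csc k a (csum m f) = csum m (fun i => csc k a (f i)).
Proof. induction m; simpl. apply csc_zero. rewrite csc_add, IHm. auto. Qed.
Lemma csum_cbrl m f v : cbr k (csum m f) v = csum m (fun i => cbr k (f i) v).
Proof. induction m; simpl. apply cbr0l. rewrite cbr_addl, IHm. auto. Qed.
Lemma csum_cbrr m f v : cbr k v (csum m f) = csum m (fun i => cbr k v (f i)).
Proof. induction m; simpl. apply cbr0r. rewrite cbr_addr, IHm. auto. Qed.
Lemma csum_swap m p (f : nat -> nat -> CV k) :
  csum m (fun i => csum p (fun j => f i j)) = csum p (fun j => csum m (fun i => f i j)).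
Proof.
  induction m; simpl. rewrite csum_zero; auto. rewrite IHm, csum_add. auto.
Qed.
Lemma csum_shift m f : cadd k (csum m (fun i => f (S i))) (f O) = cadd k (csum m f) (f m).
Proof.
  induction m; simpl. reflexivity.
  rewrite <- cadd_assoc, (cadd_comm _ (f (S m))), cadd_assoc, IHm. auto.
Qed.
Lemma csum_first m f : csum (S m) f = cadd k (f O) (csum m (fun i => f (S i))).
Proof. simpl. rewrite <- csum_shift, cadd_comm. auto. Qed.
Lemma csum_sc m g u : csum m (fun j => csc k (g j) u) = csc k (sumC m g) u.
Proof.
  induction m; simpl. rewrite csc_0. auto. rewrite IHm. unfold cplus. rewrite csc_addl. auto.
Qed.
Lemma cadd_cancel (a b c : CV k) : cadd k a c = cadd k b c -> a = b.
Proof.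
  destruct a as [a1 a2], b as [b1 b2], c as [c1 c2]; unfold cadd; simpl; intros H. injection H; intros H2 H1.
  rewrite !(addC k _ c1) in H1. rewrite !(addC k _ c2) in H2.
  apply add_cancel in H1. apply add_cancel in H2. subst; auto.
Qed.
End Sums.
Arguments csum {k}.


Section Main.
Variable k : HilbertLie.
Variable phi : k -> k.
Variable t : k -> Prop.
Variable n : nat.
Hypothesis phiD : forall x y, phi (add x y) = add (phi x) (phi y).
Hypothesis phiZ : forall a x, phi (scal a x) = scal a (phi x).
Hypothesis phiB : forall x y, phi (br x y) = br (phi x) (phi y).
Hypothesis hn : (1 <= n)%nat.
Hypothesis hper : forall x, iter_fun n phi x = x.
Hypothesis tmax : max_abelian_in k (fixed_pts k phi) t.

Local Notation z := (centralizer k t).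
Ltac bsimp := repeat (rewrite ?(brDl k), ?(brDr k), ?(brZl k), ?(brZr k), ?br_oppl, ?br_oppr, ?br0l, ?br0r).

Lemma phi0 : phi zero = zero.
Proof. rewrite (zero_scal zero) at 1. rewrite phiZ. apply scal0. Qed.

Lemma z_zero : z zero.
Proof. intros y _. apply br0l. Qed.
Lemma z_add x y : z x -> z y -> z (add x y).
Proof. intros Hx Hy s Hs. rewrite (brDl k), Hx, Hy; auto. apply add0. Qed.
Lemma z_scal a x : z x -> z (scal a x).
Proof. intros Hx s Hs. rewrite (brZl k), Hx; auto. apply scalz. Qed.
Lemma z_br x y : z x -> z y -> z (br x y).
Proof.
  intros Hx Hy s Hs. rewrite (br_anti (br x y)), jac, (br_anti s x), (br_anti s y), (Hx s Hs), (Hy s Hs), !scalz, br0l, br0r, add0.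
  apply scalz.
Qed.
Lemma tfix s : t s -> phi s = s.
Proof. destruct tmax as [_ [H _]]. apply H. Qed.
Lemma z_phi x : z x -> z (phi x).
Proof. intros Hx s Hs. rewrite <- (tfix s Hs) at 1. rewrite <- phiB, Hx; auto. apply phi0. Qed.
Lemma z_iter m x : z x -> z (iter_fun m phi x).
Proof. induction m; simpl; auto. intros; apply z_phi; auto. Qed.
Lemma t_z s : t s -> z s.
Proof. destruct tmax as [[_ H] _]. intros Hs y Hy. apply H; auto. Qed.
Lemma central s v : t s -> z v -> br s v = zero.
Proof. intros Hs Hv. rewrite br_anti, Hv; auto. apply scalz. Qed.

Lemma fix_t x : z x -> phi x = x -> t x.
Proof.
  intros Hz Hf. destruct tmax as [[[t0 [tadd [tsc tbr]]] tab] [tf tm]].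
  set (S' := fun y => exists a s, t s /\ y = add s (scal a x)).
  assert (Hab : forall y1 y2, S' y1 -> S' y2 -> br y1 y2 = zero).
  { intros y1 y2 [a [s1 [H1 ->]]] [b [s2 [H2 ->]]]. bsimp.
    rewrite (tab s1 s2), (Hz s2), (central s1 x), (br_alt k); auto. rewrite !scalz, !addr0. auto. }
  apply (tm S').
  - split; [|exact Hab]. split; [|split; [|split]].
    + exists 0, zero. split; auto. rewrite scal0, addr0. auto.
    + intros y1 y2 [a [s1 [H1 ->]]] [b [s2 [H2 ->]]]. exists (a + b), (add s1 s2). split; auto.
      rewrite (scalDl k). lin_eq.
    + intros c y [a [s1 [H1 ->]]]. exists (c * a), (scal c s1). split; auto. rewrite <- (scalA k). lin_eq.
    + intros y1 y2 H1 H2. exists 0, zero. split; auto. rewrite Hab; auto. rewrite scal0, addr0. auto.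
  - intros y [a [s [Hs ->]]]. unfold fixed_pts. rewrite phiD, phiZ, Hf, (tf s Hs). auto.
  - intros y Hy. exists 0, y. split; auto. rewrite scal0, addr0. auto.
  - exists 1, zero. split; auto. rewrite (scal1 k), add0. auto.
Qed.

Definition cphi (u : CV k) : CV k := (phi (fst u), phi (snd u)).
Definition zC (u : CV k) := z (fst u) /\ z (snd u).
Definition E (lam : R * R) (u : CV k) := zC u /\ cphi u = csc k lam u.

Ltac peq := apply pair_eq; simpl.
Ltac psimp := repeat (rewrite ?phiD, ?phiZ, ?phiB, ?phi0).

Lemma cphi_cadd u v : cphi (cadd k u v) = cadd k (cphi u) (cphi v).
Proof. peq; psimp; auto. Qed.
Lemma cphi_csc a u : cphi (csc k a u) = csc k a (cphi u).
Proof. peq; psimp; auto. Qed.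
Lemma cphi_cbr u v : cphi (cbr k u v) = cbr k (cphi u) (cphi v).
Proof. peq; psimp; auto. Qed.
Lemma cphi_cconj u : cphi (cconj k u) = cconj k (cphi u).
Proof. peq; psimp; auto. Qed.
Lemma cphi_emb x : cphi (emb k x) = emb k (phi x).
Proof. peq; psimp; auto. Qed.
Lemma cphi_czero : cphi (czero k) = czero k.
Proof. peq; psimp; auto. Qed.
Lemma cphi_csum m f : cphi (csum m f) = csum m (fun i => cphi (f i)).
Proof. induction m; simpl. apply cphi_czero. rewrite cphi_cadd, IHm. auto. Qed.

Lemma zC_zero : zC (czero k). Proof. split; apply z_zero. Qed.
Lemma zC_add u v : zC u -> zC v -> zC (cadd k u v).
Proof. intros [] []; split; simpl; apply z_add; auto. Qed.
Lemma zC_csc a u : zC u -> zC (csc k a u).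
Proof. intros []; split; simpl; apply z_add; apply z_scal; auto. Qed.
Lemma zC_cbr u v : zC u -> zC v -> zC (cbr k u v).
Proof. intros [] []; split; simpl; apply z_add; try apply z_scal; apply z_br; auto. Qed.
Lemma zC_cconj u : zC u -> zC (cconj k u).
Proof. intros []; split; simpl; auto. apply z_scal; auto. Qed.
Lemma zC_emb x : z x -> zC (emb k x).
Proof. split; simpl; auto. apply z_zero. Qed.
Lemma zC_csum m f : (forall i, zC (f i)) -> zC (csum m f).
Proof. intros H; induction m; simpl. apply zC_zero. apply zC_add; auto. Qed.

Lemma E_cbr a b u v : E a u -> E b v -> E (cmul a b) (cbr k u v).
Proof.
  intros [Hu Eu] [Hv Ev]. split. apply zC_cbr; auto.
  rewrite cphi_cbr, Eu, Ev, cbr_cscl, cbr_cscr, csc_csc, cmul_comm. auto.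
Qed.
Lemma E_conj a u : E a u -> E (cconjs a) (cconj k u).
Proof. intros [Hu Eu]. split. apply zC_cconj; auto. rewrite cphi_cconj, Eu, cconj_csc. auto. Qed.
Lemma E_eq a b u : a = b -> E a u -> E b u.
Proof. intros ->; auto. Qed.

Lemma E1_central c v : E (1,0) c -> zC v -> cbr k c v = czero k.
Proof.
  intros [[H1 H2] Ec] [V1 V2]. rewrite csc_1 in Ec. unfold cphi in Ec. destruct c as [c1 c2]. simpl in *.
  injection Ec; intros F2 F1.
  assert (T1 := fix_t c1 H1 F1). assert (T2 := fix_t c2 H2 F2).
  destruct v as [v1 v2]. unfold cbr; simpl. rewrite !central; auto. rewrite scalz, !addr0. auto.
Qed.

Lemma key lam mu b v : E lam b -> E mu v -> cmul lam (cconjs lam) = (1,0) ->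
  cbr k b (cbr k b v) = czero k -> cbr k b v = czero k.
Proof.
  intros Eb Ev Hl Hw.
  assert (Ec : E (1,0) (cbr k b (cconj k b))).
  { rewrite <- Hl. apply E_cbr; auto. apply E_conj; auto. }
  assert (Ecc : E (1,0) (cconj k (cbr k b (cconj k b)))).
  { apply (E_eq (cconjs (1,0))). unfold cconjs; simpl. f_equal; ring. apply E_conj; auto. }
  assert (zb : zC b) by apply Eb.
  assert (C0 : cbr k b (cconj k b) = czero k).
  { apply rho_conj_zero. rewrite rho_inv. rewrite (cbr_anti _ b), E1_central; auto.
    rewrite csc_zero, rho_zero. ring. }
  assert (C0' : cbr k (cconj k b) b = czero k).
  { rewrite cbr_anti, C0. apply csc_zero. }
  set (w := cbr k b v) in *.
  assert (U0 : cbr k (cconj k b) w = czero k).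
  { apply rho_conj_zero. rewrite rho_inv. rewrite cconj_cbr, cconj_cconj, cjac, C0', cbr0l.
    assert (Hbw : cbr k (cconj k b) (cconj k w) = czero k) by (rewrite <- cconj_cbr, Hw; apply cconj_zero).
    rewrite Hbw, cbr0r, c0add. rewrite rho_zero. ring. }
  apply rho_conj_zero. unfold w at 1. rewrite rho_inv.
  rewrite <- (cconj_cconj _ b) at 1. rewrite <- cconj_cbr, U0, cconj_zero. rewrite rho_zero. ring.
Qed.

Definition NN p q := forall a b, E (cpow (zeta n) p) a -> E (cpow (zeta n) q) b -> cbr k a b = czero k.

Lemma N0 q : NN 0 q.
Proof. intros a b Ea Eb. apply E1_central; auto. apply Eb. Qed.
Lemma Nsym p q : NN p q -> NN q p.
Proof. intros H a b Ea Eb. rewrite cbr_anti, H; auto. apply csc_zero. Qed.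
Lemma N3 p q : NN q (p + q) -> NN q p.
Proof.
  intros H b v Eb Ev. apply (key _ _ b v Eb Ev). apply zeta_norm.
  apply H; auto. apply (E_eq (cmul (cpow (zeta n) q) (cpow (zeta n) p))).
  rewrite Nat.add_comm, cpow_add. auto. apply E_cbr; auto.
Qed.
Lemma Nstep p q : NN (p + q) q -> NN p q.
Proof. intros H. apply Nsym, N3, Nsym, H. Qed.
Lemma Nchain m : forall p q, NN (p + m * q) q -> NN p q.
Proof.
  induction m; intros p q H. rewrite Nat.mul_0_l, Nat.add_0_r in H. auto.
  apply Nstep. apply IHm. replace (p + q + m * q)%nat with (p + S m * q)%nat by lia. auto.
Qed.
Lemma Nper a b c : NN a b -> NN (a + n * c) b.
Proof.
  intros H u v Eu Ev. apply H; auto. revert Eu. apply E_eq.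
  rewrite cpow_add, cpow_mul, zeta_n, cpow_one, cmul_1r; auto.
Qed.
Lemma allN : forall p q, NN p q.
Proof.
  assert (G : forall s p q, (p + q <= s)%nat -> NN p q).
  { induction s; intros p q Hs.
    - replace p with 0%nat by lia. apply N0.
    - destruct p as [|p']. apply N0. destruct q as [|q']. apply Nsym, N0.
      destruct (Nat.le_gt_cases (S q') (S p')) as [Hle|Hlt].
      + apply (Nchain (n - 1)). replace (S p' + (n - 1) * S q')%nat with ((S p' - S q') + n * S q')%nat by nia.
        apply Nper. apply IHs. lia.
      + apply Nsym. apply (Nchain (n - 1)). replace (S q' + (n - 1) * S p')%nat with ((S q' - S p') + n * S p')%nat by nia.
        apply Nper. apply IHs. lia. }
  intros p q. apply (G (p + q)%nat). lia.
Qed.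

Definition PP j x := csum n (fun kk => csc k (cpow (mu n) (j * kk)) (emb k (iter_fun kk phi x))).

Lemma P_E j x : z x -> E (cpow (zeta n) j) (PP j x).
Proof.
  intros Hx. split.
  { apply zC_csum. intros i. apply zC_csc, zC_emb, z_iter; auto. }
  unfold PP. set (f := fun kk => csc k (cpow (mu n) (j * kk)) (emb k (iter_fun kk phi x))).
  rewrite cphi_csum.
  assert (Hs : forall i, cphi (f i) = csc k (cpow (zeta n) j) (f (S i))).
  { intros i. unfold f. rewrite cphi_csc, cphi_emb, csc_csc. simpl iter_fun. f_equal.
    rewrite Nat.mul_succ_r, cpow_add, cmul_assoc, (cmul_comm (cpow (zeta n) j) (cpow (mu n) (j * i))), <- cmul_assoc, zeta_mu, cmul_1r. auto. }
  rewrite (csum_ext _ n _ _ (fun i _ => Hs i)), <- csum_csc. f_equal.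
  apply (cadd_cancel _ _ _ (f O)). rewrite csum_shift. f_equal.
  unfold f. rewrite hper, Nat.mul_comm, cpow_mul, mu_n, cpow_one, Nat.mul_0_r; auto.
Qed.

Lemma P_sum x : z x -> csum n (fun j => PP j x) = csc k (INR n, 0) (emb k x).
Proof.
  intros Hx. unfold PP. rewrite csum_swap.
  rewrite (csum_ext _ n _ (fun kk => csc k (sumC n (cpow (cpow (mu n) kk))) (emb k (iter_fun kk phi x)))).
  2:{ intros i _. rewrite csum_sc. f_equal. apply sumC_ext. intros j. rewrite Nat.mul_comm, cpow_mul. auto. }
  assert (Hn1 := hn). assert (Hmu := mu_ne1 n hn). assert (Hmun := mu_n n hn).
  destruct n as [|m]. lia.
  rewrite csum_first. simpl cpow at 1. rewrite (sumC_ext _ _ (fun _ => (1,0))) by apply cpow_one.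
  rewrite sumC_one. simpl iter_fun at 1.
  rewrite (csum_ext _ m _ (fun _ => czero k)). rewrite csum_zero, cadd0. auto.
  intros i Hi. rewrite geo0. apply csc_0.
  rewrite <- cpow_mul, Nat.mul_comm, cpow_mul, Hmun. apply cpow_one.
  apply Hmu. lia.
Qed.

Lemma comm x y : z x -> z y -> br x y = zero.
Proof.
  intros Hx Hy.
  assert (H : cbr k (csum n (fun i => PP i x)) (csum n (fun j => PP j y)) = czero k).
  { rewrite csum_cbrl. rewrite (csum_ext _ n _ (fun _ => czero k)). apply csum_zero.
    intros i _. rewrite csum_cbrr. rewrite (csum_ext _ n _ (fun _ => czero k)). apply csum_zero.
    intros j _. apply (allN i j); apply P_E; auto. }
  rewrite (P_sum x Hx), (P_sum y Hy), cbr_cscl, cbr_cscr, cbr_emb, csc_csc in H.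
  assert (Hn0 : INR n <> 0) by (apply not_0_INR; lia).
  apply (f_equal (csc k (/ (INR n * INR n), 0))) in H.
  rewrite csc_csc, csc_zero in H.
  replace (cmul (/ (INR n * INR n), 0) (cmul (INR n, 0) (INR n, 0))) with (1, 0) in H.
  rewrite csc_1 in H. apply (f_equal fst) in H. simpl in H. auto.
  unfold cmul; simpl. f_equal; field; auto.
Qed.

End Main.


Theorem lemmaD2 (k : HilbertLie) (phi : k -> k) (t : k -> Prop) :
  is_automorphism k phi -> finite_order k phi ->
  max_abelian_in k (fixed_pts k phi) t ->
  max_abelian_in k (whole k) (centralizer k t).
Proof.
  intros Haut [n [Hn Hper]] Hmax. destruct Haut as [phiD [phiZ [phiB _]]].
  split; [split; [split; [|split; [|split]]|] | split].
  - apply z_zero.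
  - intros; apply z_add; auto.
  - intros; apply z_scal; auto.
  - intros; apply z_br; auto.
  - intros x y Hx Hy. eapply comm; eauto.
  - intros; exact I.
  - intros S' [_ Hab'] _ Hsub x Hx y Hy. apply Hab'; auto. apply Hsub. eapply t_z; eauto.
Qed.
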